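(* Let $V$ be a space. (i) $V$ is CM if and only if $V$ is homothetic to $\mathbb{Q}(\sqrt{-d})$ for some squarefree positive integer $d$. (ii) For a squarefree positive integer $d\neq 1,3$, the rational angles in $\mathbb{Q}(\sqrt{-d})$ are, up to equivalence, precisely those of the form $(v,\sqrt{-d}\,v)$ with $v\in\mathbb{Q}(\sqrt{-d})\setminus\{0\}$. (iii) The rational angles in $\mathbb{Q}(i)$ are, up to equivalence, precisely those of the form $(v,\lambda v)$ with $v\in\mathbb{Q}(i)\setminus\{0\}$ and $\lambda\in\{i,i+1,i-1\}$. (iv) The rational angles in $\mathbb{Q}(\sqrt{-3})$ are, up to equivalence, precisely those of the form $(v,\lambda v)$ with $v\in\mathbb{Q}(\sqrt{-3})\setminus\{0\}$ and $\lambda\in\{\sqrt{-3},\zeta,\zeta-1,\zeta+1,\zeta+2\}$, where $\zeta=\frac{-1+\sqrt{-3}}{2}$.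
   Context: A space is a $2$-dimensional $\mathbb{Q}$-vector subspace $V\subset\mathbb{C}$ containing two $\mathbb{R}$-linearly independent vectors. Spaces $V_1,V_2$ are homothetic if $V_2=\lambda V_1$ for some $\lambda\in\mathbb{C}^*$. $V$ is CM (has complex multiplication) if there is $\lambda\in\mathbb{C}\setminus\mathbb{Q}$ with $\lambda V\subseteq V$. A rational angle of $V$ is an ordered pair of distinct lines $(\mathbb{R}v_1,\mathbb{R}v_2)$, written $(v_1,v_2)$, with $v_1,v_2\in V\setminus\{0\}$, $v_2/v_1\notin\mathbb{R}$ and $\arg(v_2/v_1)\in\mathbb{Q}\pi$. Two rational angles are equivalent if one is obtained from the other by swapping the two lines. *)

(* Defs.v *)
From mathcomp Require Import all_boot all_algebra.
From mathcomp Require Import reals trigo.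
From mathcomp Require Export complex.
Set Implicit Arguments. Unset Strict Implicit. Unset Printing Implicit Defensive.
Import GRing.Theory Num.Theory.
Local Open Scope ring_scope.
Local Open Scope complex_scope.

Section Defs.
Variable R : realType.
Local Notation C := R[i].

Definition is_realC (z : C) : Prop := exists r : R, z = r%:C.

Definition R_indep (u w : C) : Prop :=
  forall a b : R, a%:C * u + b%:C * w = 0 -> a = 0 /\ b = 0.
Definition Q_indep (u w : C) : Prop :=
  forall a b : rat, ratr a * u + ratr b * w = 0 -> a = 0 /\ b = 0.

(* A space: a 2-dimensional Q-vector subspace of C (the Q-span of two
   Q-independent vectors) containing two R-linearly independent vectors. *)
Definition is_space (V : C -> Prop) : Prop :=
  (exists e1 e2 : C, Q_indep e1 e2 /\
     forall z, V z <-> exists a b : rat, z = ratr a * e1 + ratr b * e2) /\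
  (exists u w : C, V u /\ V w /\ R_indep u w).

Definition homothetic (V1 V2 : C -> Prop) : Prop :=
  exists l : C, l != 0 /\ forall z, V2 z <-> exists y, V1 y /\ z = l * y.

Definition is_CM (V : C -> Prop) : Prop :=
  exists l : C, (forall q : rat, l <> ratr q) /\ forall z, V z -> V (l * z).

Definition iC : C := 0 +i* 1.

(* sqrt(-d) = i * sqrt d *)
Definition sqrtm (d : nat) : C := 0 +i* Num.sqrt (d%:R : R).

Definition Qsqrtm (d : nat) : C -> Prop :=
  fun z => exists a b : rat, z = ratr a + ratr b * sqrtm d.

Definition line (v : C) : C -> Prop := fun z => exists r : R, z = r%:C * v.

Definition rational_arg (w : C) : Prop :=
  exists (q : rat) (r : R), 0 < r /\
    w = r%:C * (cos (ratr q * pi) +i* sin (ratr q * pi)).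

Definition rational_angle (V : C -> Prop) (L1 L2 : C -> Prop) : Prop :=
  L1 <> L2 /\
  exists v1 v2 : C, V v1 /\ V v2 /\ v1 != 0 /\ v2 != 0 /\
    L1 = line v1 /\ L2 = line v2 /\
    ~ is_realC (v2 / v1) /\ rational_arg (v2 / v1).

Definition angle_of_form (V : C -> Prop) (Lam : C -> Prop) (L1 L2 : C -> Prop)
  : Prop :=
  exists v l : C, V v /\ v != 0 /\ Lam l /\
    ((L1 = line v /\ L2 = line (l * v)) \/ (L1 = line (l * v) /\ L2 = line v)).

End Defs.

Definition squarefree (d : nat) : Prop := forall p : nat, prime p -> ~~ (p * p %| d)%N.

(* Main.v *)
Require Import Defs.
From mathcomp Require Import all_boot all_order all_algebra.
From mathcomp Require Import reals trigo.
From mathcomp Require Import complex.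
From mathcomp Require Import ring lra zify boolp.
Import Order.TTheory GRing.Theory Num.Theory.
Local Open Scope ring_scope.

Lemma sf_sq d k : squarefree d -> (0 < d)%N -> (k * k %| d)%N -> k = 1%N.
Proof.
move=> sf d0 kd.
case: k kd => [|[|k]] kd //.
  by move: kd; rewrite muln0 dvd0n => /eqP h; rewrite h in d0.
exfalso; have p := pdiv_prime (isT : (1 < k.+2)%N).
apply: (negP (sf _ p)); apply: dvdn_trans kd.
by apply: dvdn_mul; exact: pdiv_dvd.
Qed.

Lemma rat_sq (x : rat) (n : nat) : x ^+ 2 = n%:R -> exists m : nat, (m * m = n)%N.
Proof.
move=> h.
set p := numq x; set s := denq x.
have s0 : 0 < s := denq_gt0 x.
have e : p ^+ 2 = n%:R * s ^+ 2.
  apply: (@intr_inj rat); rewrite rmorphXn rmorphM /= rmorphXn /= rmorph_nat.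
  rewrite -h -(divq_num_den x) -/p -/s expr_div_n divfK //.
  by rewrite expf_neq0 // intr_eq0 gt_eqF.
have e' : (`|p| * `|p| = n * (`|s| * `|s|))%N.
  by have := congr1 absz e; rewrite abszM !abszX !mulnn natz.
have sd : (`|s| %| `|p| ^ 2)%N by rewrite -mulnn e' dvdn_mull // dvdn_mulr.
have cp : coprime `|s| (`|p| ^ 2) by rewrite coprimeXr // coprime_sym coprime_num_den.
move: cp; rewrite /coprime (gcdn_idPl sd) => /eqP s1.
by exists `|p|%N; rewrite e' s1 !muln1.
Qed.

Lemma SQ1 d (x : rat) : squarefree d -> (0 < d)%N -> x ^+ 2 = d%:R -> d = 1%N.
Proof.
move=> sf d0 /rat_sq [m hm].
have : m = 1%N by apply: (sf_sq _ _ sf d0); rewrite hm.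
by move=> m1; rewrite -hm m1.
Qed.

Lemma SQ3 d (x : rat) : squarefree d -> (0 < d)%N -> x ^+ 2 = (3 * d)%:R -> d = 3%N.
Proof.
move=> sf d0 /rat_sq [m hm].
have p3 : prime 3 by [].
have : (3 %| m * m)%N by rewrite hm dvdn_mulr.
rewrite Euclid_dvdM // orbb => /dvdnP [k mk].
have dk : d = (k * k * 3)%N by apply/eqP; rewrite -(eqn_pmul2l (isT : (0 < 3)%N)); apply/eqP; rewrite -hm mk; ring.
have : k = 1%N by apply: (sf_sq _ _ sf d0); rewrite dk dvdn_mulr.
by move=> k1; rewrite dk k1.
Qed.

Lemma sf_decomp (n : nat) : (0 < n)%N -> exists d j : nat, [/\ (0 < d)%N, squarefree d & n = (d * (j * j))%N].
Proof.
elim/ltn_ind: n => n IH n0.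
case: (pselect (squarefree n)) => [sf|nsf].
  by exists n, 1%N; split=> //; rewrite !muln1.
have [p [pp pd]] : exists p, prime p /\ (p * p %| n)%N.
  apply: contrapT => hh; apply: nsf => p pp; apply/negP => pd; apply: hh; by exists p.
have p0 : (0 < p)%N by exact: prime_gt0.
move: pd => /dvdnP [n' nE].
have n'0 : (0 < n')%N by move: n0; rewrite nE muln_gt0 => /andP [].
have lt : (n' < n)%N.
  rewrite nE -[X in (X < _)%N]muln1 ltn_pmul2l // (ltn_trans (prime_gt1 pp)) //.
  by rewrite -[X in (X < _)%N]muln1 ltn_pmul2l // prime_gt1.
have [d [j [d0 sf e]]] := IH n' lt n'0.
by exists d, (j * p)%N; split=> //; rewrite nE e; ring.
Qed.

Lemma sf_decomp_rat (D : rat) : 0 < D -> exists (d : nat) (k : rat), [/\ (0 < d)%N, squarefree d, k != 0 & D = d%:R * k ^+ 2].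
Proof.
move=> D0.
set p := numq D; set s := denq D.
have s0 : 0 < s := denq_gt0 D.
have p0 : 0 < p by rewrite /p numq_gt0.
have ps0 : (0 < `|p| * `|s|)%N by rewrite muln_gt0 !absz_gt0 !gt_eqF.
have [d [j [d0 sf e]]] := sf_decomp _ ps0.
have PE : (`|p|%:R : rat) = p%:~R by rewrite -[RHS]/(intmul 1 p) -{2}(gez0_abs (ltW p0)).
have SE : (`|s|%:R : rat) = s%:~R by rewrite -[RHS]/(intmul 1 s) -{2}(gez0_abs (ltW s0)).
have S0 : (`|s|%:R : rat) != 0 by rewrite pnatr_eq0 absz_eq0 gt_eqF.
have j0 : j != 0%N by apply/eqP=> j0; move: ps0; rewrite e j0 !muln0.
exists d, (j%:R / `|s|%:R); split=> //.
  by rewrite mulf_neq0 ?invr_eq0 // pnatr_eq0.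
have e2 : (`|p|%:R * `|s|%:R : rat) = d%:R * (j%:R * j%:R) by rewrite -!natrM e.
rewrite -(divq_num_den D) -/p -/s -PE -SE expr_div_n mulrA (expr2 (j%:R : rat)) -e2.
by field.
Qed.


Section Niven.
Variable R : realType.

Lemma cos_int2pi (z : int) : cos (z%:~R * (pi *+ 2)) = 1 :> R.
Proof.
have hn : forall n : nat, cos (n%:R * (pi *+ 2)) = 1 :> R.
  elim=> [|n IH]; first by rewrite mul0r cos0.
  by rewrite -addn1 natrD mulrDl mul1r cosD2pi.
case: z => n; first by rewrite -[n%:Z%:~R]/(n%:R : R) hn.
by rewrite NegzE mulrNz mulNr cosN -[(n.+1)%:Z%:~R]/((n.+1)%:R : R) hn.
Qed.

Fixpoint ab (p s2 : int) (k : nat) : int * int :=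
  match k with
  | 0 => (2, p)
  | k'.+1 => ((ab p s2 k').2, p * (ab p s2 k').2 - s2 * (ab p s2 k').1)
  end.

Lemma ab_rec p s2 k : (ab p s2 k.+2).1 = p * (ab p s2 k.+1).1 - s2 * (ab p s2 k).1.
Proof. by []. Qed.

Lemma niven (q t : rat) : (ratr t : R) = 2 * cos (ratr q * pi) ->
  t = -2 \/ t = -1 \/ t = 0 \/ t = 1 \/ t = 2.
Proof.
move=> ht.
set phi : R := ratr q * pi.
pose c (k : nat) : R := 2 * cos (k%:R * phi).
have crec : forall k, c k.+2 = c 1%N * c k.+1 - c k.
  move=> k; rewrite /c.
  have -> : (k.+2)%:R * phi = k.+1%:R * phi + phi by rewrite -addn1 natrD mulrDl mul1r.
  have -> : (k%:R * phi) = k.+1%:R * phi - phi by rewrite -addn1 natrD mulrDl mul1r addrK.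
  rewrite cosD cosB mul1r; ring.
set p := numq t; set s := denq t.
have s0 : 0 < s := denq_gt0 t.
have tE : (ratr t : R) = p%:~R / s%:~R.
  by rewrite -[in LHS](divq_num_den t) fmorph_div !rmorph_int.
pose a k := (ab p (s ^+ 2) k).1.
have ca : forall k, c k = (a k)%:~R / s%:~R ^+ k.
  have h2 : forall k, c k = (a k)%:~R / s%:~R ^+ k /\ c k.+1 = (a k.+1)%:~R / s%:~R ^+ k.+1.
    have sR0 : (s%:~R : R) != 0 by rewrite intr_eq0 gt_eqF.
    elim=> [|k [IH1 IH2]].
      split; first by rewrite /c /a /= mul0r cos0 expr0 divr1 mulr1.
      by rewrite /c /a /= mul1r -/phi -ht tE expr1.
    split=> //.
    rewrite crec IH1 IH2 /a ab_rec.
    have -> : c 1%N = p%:~R / s%:~R by rewrite /c mul1r -ht tE.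
    rewrite intrD intrM mulrNz intrM rmorphXn /= !exprS.
    have sk : s%:~R ^+ k != 0 :> R by rewrite expf_neq0.
    move: sk; set S := s%:~R ^+ k => sk.
    by field; rewrite sk /=; exact: sR0.
  by move=> k; case: (h2 k).
have dv : forall k, (s %| a k.+1 - p ^+ k.+1)%Z.
  elim=> [|k IH]; first by rewrite /a /= expr1 subrr dvdz0.
  rewrite /a ab_rec -/(a k.+1) -/(a k).
  have -> : p * a k.+1 - s ^+ 2 * a k - p ^+ k.+2 = p * (a k.+1 - p ^+ k.+1) - s * (s * a k).
    by rewrite (exprS p); set P := p ^+ k.+1; ring.
  by apply: rpredB; [apply: dvdz_mull | apply: dvdz_mulr; exact: dvdzz].
set N := (2 * `|denq q|)%N.
have cN : c N = 2.
  rewrite /c /phi.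
  have -> : N%:R * (ratr q * pi) = (numq q)%:~R * (pi *+ 2) :> R.
    rewrite -[in LHS](divq_num_den q) fmorph_div !rmorph_int /N natrM.
    have -> : (`|denq q|%:R : R) = (denq q)%:~R.
      by rewrite -[RHS]/(intmul 1 (denq q)) -{2}(gez0_abs (ltW (denq_gt0 q))).
    have dq : ((denq q)%:~R : R) != 0 by rewrite intr_eq0 gt_eqF ?denq_gt0.
    by rewrite -mulr_natr; field.
  by rewrite cos_int2pi mulr1.
have N0 : (0 < N)%N by rewrite /N muln_gt0 /= absz_gt0 gt_eqF ?denq_gt0.
have aN : a N = 2 * s ^+ N.
  have := ca N; rewrite cN => h.
  apply/eqP; rewrite -(eqr_int R) intrM rmorphXn /=.
  have sR0 : (s%:~R : R) ^+ N != 0 by rewrite expf_neq0 // intr_eq0 gt_eqF.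
  by move/(congr1 (fun x : R => x * (s%:~R ^+ N))): h; rewrite divfK // => <-.
have sp : (s %| p ^+ N)%Z.
  have := dv N.-1; rewrite prednK // aN => h.
  have : (s %| 2 * s ^+ N)%Z by rewrite dvdz_mull // dvdz_exp.
  move=> h2; have -> : p ^+ N = 2 * s ^+ N - (2 * s ^+ N - p ^+ N) by ring.
  exact: rpredB.
have s1 : s = 1.
  move: sp; rewrite dvdzE abszX => sp.
  have cp : coprime `|s| (`|p| ^ N) by rewrite coprimeXr // coprime_sym coprime_num_den.
  move: cp; rewrite /coprime (gcdn_idPl sp) => /eqP h.
  by rewrite -(gez0_abs (ltW s0)) h.
have tp : t = p%:~R by rewrite -(divq_num_den t) -/s s1 divr1.
have bnd : `|(p%:~R : R)| <= 2.
  rewrite -ratr_int -tp ht normrM ger0_norm // -[X in _ <= X]mulr1 ler_pM2l //.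
  exact: cos_max.
move: bnd; rewrite -intr_norm -[2]/((2%:Z)%:~R : R) ler_int => bnd.
rewrite tp.
have : (-2 <= p <= 2)%R.
  by rewrite -(ler_norml); exact: bnd.
move=> /andP [h1 h2].
have : p = -2 \/ p = -1 \/ p = 0 \/ p = 1 \/ p = 2 by lia.
by case=> [->|[->|[->|[->|->]]]]; [left|right;left|right;right;left|right;right;right;left|right;right;right;right].
Qed.

End Niven.

Local Open Scope complex_scope.


Section Comp.
Variable R : realType.
Local Notation C := R[i].

Lemma mulCE (a b c e : R) : (a +i* b) * (c +i* e) = (a*c - b*e) +i* (a*e+b*c) :> C.
Proof. by []. Qed.
Lemma addCE (a b c e : R) : (a +i* b) + (c +i* e) = (a+c) +i* (b+e) :> C.
Proof. by []. Qed.
Lemma oppCE (a b : R) : - (a +i* b) = (-a) +i* (-b) :> C.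
Proof. by []. Qed.
Lemma invCE (a b : R) : (a +i* b)^-1 = (a / (a^+2 + b^+2)) +i* (- (b / (a^+2+b^+2))) :> C.
Proof. by []. Qed.
Lemma realCE (a : R) : a%:C = a +i* 0 :> C.
Proof. by []. Qed.
Lemma ratrC (q : rat) : (ratr q : C) = (ratr q : R) +i* 0.
Proof. by rewrite -(fmorph_rat (real_complex R)). Qed.
Lemma natC (n : nat) : (n%:R : C) = (n%:R : R) +i* 0.
Proof. by rewrite -(rmorph_nat (real_complex R)). Qed.
Lemma oneC : (1 : C) = 1 +i* 0. Proof. by []. Qed.
Lemma zeroC : (0 : C) = 0 +i* 0. Proof. by []. Qed.
Lemma expC2 (z : C) : z ^+ 2 = z * z. Proof. by rewrite expr2. Qed.
Lemma iCE : iC R = 0 +i* 1. Proof. by []. Qed.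
Lemma sqrtmE d : @sqrtm R d = 0 +i* Num.sqrt (d%:R : R). Proof. by []. Qed.
Lemma eqCP (a b c e : R) : a = c -> b = e -> a +i* b = c +i* e :> C.
Proof. by move=> -> ->. Qed.
Lemma eqCI (a b c e : R) : a +i* b = c +i* e :> C -> a = c /\ b = e.
Proof. by case. Qed.
End Comp.

Ltac cnorm := rewrite ?sqrtmE ?iCE ?ratrC ?natC ?realCE ?oneC ?zeroC ?expC2 /=;
  repeat (rewrite ?mulCE ?addCE ?oppCE ?invCE /=).


Section Qs.
Variable R : realType.
Local Notation C := R[i].
Local Notation sq d := (Num.sqrt (d%:R : R)).

Lemma sq2 d : (sq d) ^+ 2 = d%:R.
Proof. by rewrite sqr_sqrtr // ler0n. Qed.

Lemma QsE d z : @Qsqrtm R d z <-> exists a b : rat, z = (ratr a : R) +i* (ratr b * sq d).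
Proof.
split=> -[a [b ->]]; exists a, b; cnorm; apply: eqCP; ring.
Qed.

Lemma Qs_mul d x y : @Qsqrtm R d x -> @Qsqrtm R d y -> @Qsqrtm R d (x * y).
Proof.
move=> /QsE [a1 [b1 ->]] /QsE [a2 [b2 ->]]; apply/QsE.
exists (a1 * a2 - d%:R * b1 * b2), (a1 * b2 + b1 * a2); cnorm.
move: (sq2 d); set s := Num.sqrt _ => h.
apply: eqCP; rewrite ?rmorphB ?rmorphD !rmorphM /= ?rmorph_nat.
  by rewrite -h; ring.
by ring.
Qed.

Lemma Qs_inv d x : @Qsqrtm R d x -> @Qsqrtm R d x^-1.
Proof.
move=> /QsE [a [b ->]]; apply/QsE.
exists (a / (a^+2 + d%:R * b^+2)), (- b / (a^+2 + d%:R * b^+2)); cnorm.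
have E : (ratr (a ^+ 2 + d%:R * b ^+ 2) : R) = ratr a ^+ 2 + (ratr b * sq d) ^+ 2.
  by rewrite rmorphD rmorphM !rmorphXn rmorph_nat (exprMn _ (ratr b)) sq2; ring.
apply: eqCP; rewrite -E !fmorph_div ?rmorphN; first by []. by rewrite !mulNr mulrAC. Qed.


Lemma Qs_div d x y : @Qsqrtm R d x -> @Qsqrtm R d y -> @Qsqrtm R d (x / y).
Proof. by move=> hx hy; apply: Qs_mul => //; apply: Qs_inv. Qed.

Lemma Qs_rat d q : @Qsqrtm R d (ratr q).
Proof. by exists q, 0; rewrite rmorph0 mul0r addr0. Qed.

Lemma Qs_sqrtm d : @Qsqrtm R d (@sqrtm R d).
Proof. by exists 0, 1; rewrite rmorph0 rmorph1 mul1r add0r. Qed.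

Lemma Qs_add d x y : @Qsqrtm R d x -> @Qsqrtm R d y -> @Qsqrtm R d (x + y).
Proof.
move=> [a1 [b1 ->]] [a2 [b2 ->]]; exists (a1 + a2), (b1 + b2).
by rewrite !rmorphD /=; ring.
Qed.

Lemma realC_Im (z : C) : is_realC z <-> complex.Im z = 0.
Proof.
split; first by case=> r ->.
case: z => a b /= ->; by exists a.
Qed.

Lemma line_scale (c : R) (z : C) : c != 0 -> line (c%:C * z) = line z.
Proof.
move=> c0; apply: funext => y; apply: propext; split.
  by case=> r ->; exists (r * c); rewrite mulrA -rmorphM.
case=> r ->; exists (r / c); rewrite mulrA -rmorphM /= divfK //.
Qed.

Lemma line_neq (v l : C) : v != 0 -> ~ is_realC l -> line v <> line (l * v).
Proof.
move=> v0 nl E; apply: nl.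
have : line v v by exists 1; rewrite mul1r.
rewrite E => -[r /eqP]; rewrite mulrA -{1}(mul1r v) (inj_eq (mulIf v0)) => /eqP h.
have r0 : r != 0.
  by apply/eqP=> r0; move: h; rewrite r0 rmorph0 mul0r => /eqP; rewrite oner_eq0.
exists r^-1; rewrite rmorphV ?unitfE //.
have rc0 : r%:C != 0 :> C by rewrite -[0 : C]/(0%:C) (inj_eq (@complexI _)).
by apply: (mulfI rc0); rewrite -h mulfV.
Qed.

Definition eC (t : R) : C := cos t +i* sin t.

Lemma eC_mul a b : eC a * eC b = eC (a + b).
Proof. rewrite /eC mulCE cosD sinD; apply: eqCP; ring. Qed.

Lemma eC0 : eC 0 = 1.
Proof. by rewrite /eC cos0 sin0. Qed.

Lemma raE (w : C) : rational_arg w <-> exists (q : rat) (r : R), 0 < r /\ w = r%:C * eC (ratr q * pi).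
Proof. by []. Qed.

Lemma ra_mul (w1 w2 : C) : rational_arg w1 -> rational_arg w2 -> rational_arg (w1 * w2).
Proof.
move=> [q1 [r1 [r10 ->]]] [q2 [r2 [r20 ->]]]; apply/raE.
exists (q1 + q2), (r1 * r2); split; first exact: mulr_gt0.
have -> : (ratr (q1 + q2) : R) = ratr q1 + ratr q2 by rewrite rmorphD.
have -> : (r1 * r2)%:C = r1%:C * r2%:C :> C by rewrite rmorphM.
rewrite mulrDl -eC_mul /eC; ring. Qed.

Lemma ra_inv (w : C) : rational_arg w -> rational_arg w^-1.
Proof.
move=> [q [r [r0 ->]]]; apply/raE.
exists (- q), r^-1; split; first by rewrite invr_gt0.
have e1 : eC (ratr q * pi) * eC (ratr (- q) * pi) = 1.
  by rewrite eC_mul rmorphN mulNr subrr eC0.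
have ne : eC (ratr q * pi) != 0.
  by apply/eqP=> h; move: e1; rewrite h mul0r => /eqP; rewrite eq_sym oner_eq0.
have rc0 : r%:C != 0 :> C.
  by rewrite -[0 : C]/(0%:C) (inj_eq (@complexI _)) gt_eqF.
rewrite invfM rmorphV ?unitfE ?gt_eqF //; congr (_ * _).
by apply: (mulfI ne); rewrite e1 mulfV.
Qed.

Lemma ra_pos (r : R) (w : C) : 0 < r -> rational_arg w -> rational_arg (r%:C * w).
Proof.
move=> r0 [q [r' [r'0 ->]]]; apply/raE; exists q, (r * r'); split; first exact: mulr_gt0.
by rewrite rmorphM mulrA.
Qed.

Lemma ratr_half : (ratr (2^-1 : rat) : R) = 2^-1.
Proof. by rewrite fmorphV rmorph_nat. Qed.

Lemma ra_i : rational_arg (0 +i* 1 : C).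
Proof.
apply/raE; exists 2^-1, 1; split=> //.
by rewrite ratr_half (mulrC 2^-1) /eC cos_pihalf sin_pihalf mul1r.
Qed.

Lemma ra_imag (s : R) : 0 < s -> rational_arg (0 +i* s : C).
Proof.
move=> s0; have -> : (0 +i* s : C) = s%:C * (0 +i* 1) by rewrite mulCE; apply: eqCP; ring.
exact: ra_pos ra_i.
Qed.

Lemma cos_pi4 : cos (pi / 4) ^+ 2 = 2^-1 :> R.
Proof.
have h : cos ((pi / 4) *+ 2) = 0 :> R.
  have -> : pi / 4 *+ 2 = pi / 2 :> R by rewrite -mulr_natr; field.
  by rewrite cos_pihalf.
move: h; rewrite cos_mulr2n => /eqP; rewrite subr_eq0 => /eqP h.
have -> : cos (pi / 4) ^+ 2 = (cos (pi / 4) ^+ 2 *+ 2) / 2 :> R by rewrite -mulr_natr; field.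
by rewrite h mul1r.
Qed.

Lemma cos_pi4_gt0 : 0 < cos (pi / 4) :> R.
Proof.
apply: cos_gt0_pihalf; have p0 := pi_gt0 R; apply/andP; split; lra.
Qed.

Lemma sin_pi4 : sin (pi / 4) = cos (pi / 4) :> R.
Proof.
have := tan_piquarter R; rewrite /tan => h.
by rewrite -[LHS](divfK (_ : cos (pi / 4) != 0)) ?h ?mul1r // gt_eqF // cos_pi4_gt0.
Qed.

Lemma ra_45 : rational_arg (1 +i* 1 : C).
Proof.
apply/raE; exists (4^-1), (cos (pi / 4))^-1; split; first by rewrite invr_gt0 cos_pi4_gt0.
have c0 : cos (pi / 4) != 0 :> R by rewrite gt_eqF // cos_pi4_gt0.
have -> : (ratr (4^-1 : rat) : R) = 4^-1 by rewrite fmorphV rmorph_nat.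
rewrite (mulrC 4^-1) /eC sin_pi4 realCE mulCE; apply: eqCP.
  by rewrite mul0r subr0 mulVf.
by rewrite mul0r addr0 mulVf.
Qed.

Lemma cos_pi3 : cos (pi / 3) = 2^-1 :> R.
Proof.
set x := pi / 3.
have h3 : x *+ 2 + x = pi by rewrite /x -mulr_natr; field.
have c0 : 0 < cos x.
  apply: cos_gt0_pihalf; have p0 := pi_gt0 R; rewrite /x; apply/andP; split; lra.
have := cospi R; rewrite -h3 cosD cos_mulr2n sin_mulr2n => h.
have hs : sin x ^+ 2 = 1 - cos x ^+ 2 := sin2cos2 x.
have h' : (2 * cos x ^+ 2 - 1) * cos x - 2 * cos x * (1 - cos x ^+ 2) = -1.
  by rewrite -[RHS]h -hs; ring.
have e : (cos x + 1) * (2 * cos x - 1) ^+ 2 = 0.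
  have -> : (cos x + 1) * (2 * cos x - 1) ^+ 2 =
     (2 * cos x ^+ 2 - 1) * cos x - 2 * cos x * (1 - cos x ^+ 2) + 1 by ring.
  by rewrite h' addNr.
move/eqP: e; rewrite mulf_eq0 expf_eq0 /= => /orP [|].
  by move=> /eqP h1; exfalso; lra.
rewrite subr_eq0 => /eqP h2.
lra.
Qed.

Lemma sin_pi3 : sin (pi / 3) = Num.sqrt 3 / 2 :> R.
Proof.
have s0 : 0 < sin (pi / 3) :> R.
  apply: sin_gt0_pihalf; have p0 := pi_gt0 R; apply/andP; split; lra.
apply/eqP; rewrite -(eqrXn2 (_ : 0 < 2)%N) ?(ltW s0) //; last first.
  by rewrite divr_ge0 ?sqrtr_ge0.
rewrite sin2cos2 cos_pi3 expr_div_n sqr_sqrtr ?ler0n //; by apply/eqP; field.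
Qed.

Lemma ra_60 : rational_arg (2^-1 +i* (Num.sqrt 3 / 2) : C).
Proof.
apply/raE; exists (3^-1), 1; split=> //.
have -> : (ratr (3^-1 : rat) : R) = 3^-1 by rewrite fmorphV rmorph_nat.
by rewrite (mulrC 3^-1) /eC cos_pi3 sin_pi3 mul1r.
Qed.

End Qs.


Section Fwd.
Variable R : realType.
Local Notation C := R[i].
Local Notation sq d := (Num.sqrt (d%:R : R)).

Lemma fwd_core d (a b : rat) : (0 < d)%N -> b != 0 ->
  rational_arg ((ratr a : R) +i* (ratr b * sq d)) ->
  a ^+ 2 = 0 \/ a ^+ 2 = d%:R * b ^+ 2 \/ a ^+ 2 = 3 * (d%:R * b ^+ 2)
  \/ 3 * a ^+ 2 = d%:R * b ^+ 2.
Proof.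
move=> d0 b0 [q [r [r0 hw]]].
move: hw; rewrite realCE mulCE => /eqCI [].
rewrite !mul0r subr0 addr0 => ha hb.
set th := ratr q * pi : R.
set A := a ^+ 2; set B := d%:R * b ^+ 2.
have B0 : 0 < B by rewrite /B mulr_gt0 ?ltr0n // lt_def sqr_ge0 expf_neq0.
have A0 : 0 <= A by rewrite /A sqr_ge0.
set ra : R := ratr a; set rb : R := ratr b.
have sq2' : sq d ^+ 2 = d%:R := sq2 R d.
have r2 : r ^+ 2 = ra ^+ 2 + rb ^+ 2 * d%:R.
  rewrite -sq2' -exprMn.
  have := cos2Dsin2 th.
  have rn : r != 0 by rewrite gt_eqF.
  rewrite -[cos th](mulKf rn) -[sin th](mulKf rn) -ha -hb.
  move: (sq d) => S h.
  apply/eqP; rewrite eq_sym -subr_eq0; apply/eqP.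
  have : (r ^+ 2) * ((r^-1 * ra) ^+ 2 + (r^-1 * (rb * S)) ^+ 2 - 1) = 0 by rewrite h subrr mulr0.
  by move=> <-; field.
set t : rat := 2 * (A - B) / (A + B).
have ht : (ratr t : R) = 2 * cos (ratr (2 * q) * pi).
  have -> : (ratr (2 * q) : R) * pi = th *+ 2 by rewrite rmorphM rmorph_nat -mulrA mulr_natl.
  rewrite cos_mulr2n.
  have rn : r != 0 by rewrite gt_eqF.
  have -> : cos th = ra / r by rewrite /ra ha; field.
  have -> : (ratr t : R) = 2 * (ra ^+ 2 - rb ^+ 2 * d%:R) / (ra ^+ 2 + rb ^+ 2 * d%:R).
    have eA : (ratr A : R) = ra ^+ 2 by rewrite rmorphXn.
    have eB : (ratr B : R) = rb ^+ 2 * d%:R by rewrite rmorphM rmorphXn rmorph_nat mulrC.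
    have -> : (ratr t : R) = 2 * (ratr A - ratr B) / (ratr A + ratr B).
      by rewrite /t fmorph_div rmorphM rmorph_nat rmorphB rmorphD.
    by rewrite eA eB.
  have e : rb ^+ 2 * d%:R = r ^+ 2 - ra ^+ 2 by rewrite r2; ring.
  by rewrite -r2 e; field.
have AB0 : A + B != 0 by rewrite gt_eqF // ltr_wpDl.
have key : 2 * (A - B) = t * (A + B) by rewrite /t divfK.
clearbody t A B.
case: (niven R _ _ ht) => [tE|[tE|[tE|[tE|tE]]]]; rewrite tE in key.
all: first [by left; lra | by right; left; lra | by right; right; left; lra
  | by right; right; right; lra | by exfalso; lra].
Qed.
End Fwd.


Section Ang.
Variable R : realType.
Local Notation C := R[i].
Local Notation sq d := (Num.sqrt (d%:R : R)).

Lemma angle_fwd d L1 L2 : (0 < d)%N -> rational_angle (@Qsqrtm R d) L1 L2 ->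
  exists v1 (a b : rat), [/\ @Qsqrtm R d v1, v1 != 0, b != 0, L1 = line v1 &
    L2 = line ((ratr a + ratr b * @sqrtm R d) * v1) /\
    (a ^+ 2 = 0 \/ a ^+ 2 = d%:R * b ^+ 2 \/ a ^+ 2 = 3 * (d%:R * b ^+ 2)
    \/ 3 * a ^+ 2 = d%:R * b ^+ 2)].
Proof.
move=> d0 [_ [v1 [v2 [h1 [h2 [n1 [n2 [E1 [E2 [nr ra]]]]]]]]]].
have hw := Qs_div R d _ _ h2 h1.
have [a [b wE]] := hw.
have [a' [b' wE']] := (iffLR (QsE R d _) hw).
have wE2 : v2 / v1 = (ratr a' : R) +i* (ratr b' * sq d) := wE'.
have b0 : b' != 0.
  apply/eqP=> b0; apply: nr; apply/(realC_Im R); rewrite wE2 b0 /=.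
  by rewrite rmorph0 mul0r.
exists v1, a', b'; split=> //; split.
  rewrite E2; congr line.
  have -> : ratr a' + ratr b' * @sqrtm R d = v2 / v1.
    by rewrite wE2; cnorm; congr (_ +i* _); ring.
  by rewrite divfK.
apply: (fwd_core R d a' b' d0 b0); rewrite -wE2 //.
Qed.

Lemma fwd_finish (V Lam : C -> Prop) v1 L1 L2 (w l : C) (c : R) :
  V v1 -> v1 != 0 -> Lam l -> c != 0 -> w = c%:C * l -> L1 = line v1 ->
  L2 = line (w * v1) -> angle_of_form V Lam L1 L2.
Proof.
move=> h1 n1 hl c0 wE E1 E2; exists v1, l; do 3 (split=> //); left; split=> //.
by rewrite E2 wE -mulrA (line_scale R).
Qed.

Lemma rev_gen d (Lam : C -> Prop) L1 L2 :
  (forall l, Lam l -> [/\ @Qsqrtm R d l, ~ is_realC l & rational_arg l]) ->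
  angle_of_form (@Qsqrtm R d) Lam L1 L2 -> rational_angle (@Qsqrtm R d) L1 L2.
Proof.
move=> hL [v [l [hv [v0 [hl H]]]]].
have [lK lnr lra] := hL l hl.
have l0 : l != 0 by apply/eqP=> l0; apply: lnr; exists 0; rewrite l0.
have lv0 : l * v != 0 by rewrite mulf_neq0.
have lvK : @Qsqrtm R d (l * v) by exact: Qs_mul R d _ _ lK hv.
case: H => [[E1 E2]|[E1 E2]].
  split; first by rewrite E1 E2; exact: line_neq R _ _ v0 lnr.
  exists v, (l * v); do 6 (split=> //).
  by rewrite mulfK.
split; first by rewrite E1 E2 => h; apply: (line_neq R _ _ v0 lnr); rewrite h.
exists (l * v), v; do 6 (split=> //).
have -> : v / (l * v) = l^-1 by rewrite invfM mulrCA mulfV // mulr1.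
split; last exact: ra_inv R _ lra.
move=> [r rE]; apply: lnr; exists r^-1.
by rewrite -[l]invrK rE rmorphV // unitfE; apply/eqP=> r0; move: rE; rewrite r0 rmorph0 => /eqP; rewrite invr_eq0 (negPf l0).
Qed.

End Ang.


Lemma sf1 : squarefree 1.
Proof. move=> p pp; apply/negP => /(dvdn_leq (isT : (0 < 1)%N)) h; have := prime_gt1 pp; nia. Qed.
Lemma sf3 : squarefree 3.
Proof. move=> p pp; apply/negP => /(dvdn_leq (isT : (0 < 3)%N)) h; have := prime_gt1 pp; nia. Qed.

Lemma sq_div (a b k : rat) : b != 0 -> a ^+ 2 = k * b ^+ 2 -> (a / b) ^+ 2 = k.
Proof. by move=> b0 h; rewrite expr_div_n h mulfK // expf_neq0. Qed.

Lemma sq_pm (a b k : rat) : a ^+ 2 = k ^+ 2 * b ^+ 2 -> a = k * b \/ a = - (k * b).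
Proof.
move=> h; have : (a - k * b) * (a + k * b) = 0 by rewrite -subr_sqr exprMn h subrr.
move/eqP; rewrite mulf_eq0 => /orP [/eqP e|/eqP e]; [left|right].
  by apply/eqP; rewrite -subr_eq0 e.
by apply/eqP; rewrite -subr_eq0 opprK e.
Qed.

Section Parts.
Variable R : realType.
Local Notation C := R[i].
Local Notation sq d := (Num.sqrt (d%:R : R)).

Lemma rM (x y : rat) : (ratr (x * y) : R) = ratr x * ratr y. Proof. exact: rmorphM. Qed.
Lemma rN (x : rat) : (ratr (- x) : R) = - ratr x. Proof. exact: rmorphN. Qed.
Lemma r0 : (ratr 0 : R) = 0. Proof. exact: rmorph0. Qed.

Lemma ratrC_neq0 (b : rat) : b != 0 -> (ratr b : R) != 0.
Proof. by rewrite fmorph_eq0. Qed.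

Lemma notreal_Im (z : C) : complex.Im z != 0 -> ~ is_realC z.
Proof. by move=> h /(realC_Im R) e; rewrite e eqxx in h. Qed.

Lemma part2 d : (0 < d)%N -> squarefree d -> d <> 1%N -> d <> 3%N ->
  forall L1 L2 : C -> Prop,
  rational_angle (@Qsqrtm R d) L1 L2 <->
  angle_of_form (@Qsqrtm R d) (fun l => l = @sqrtm R d) L1 L2.
Proof.
move=> d0 sf d1 d3 L1 L2; split.
  move/(angle_fwd R d L1 L2 d0) => [v1 [a [b [hv v0 b0 E1 [E2 H]]]]].
  case: H => [|[|[]]] H.
  - have a0 : a = 0 by move/eqP: H; rewrite expf_eq0 /= => /eqP.
    apply: (fwd_finish R _ _ v1 L1 L2 _ (@sqrtm R d) (ratr b) hv v0 _ _ _ E1 E2) => //.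
    + exact: ratrC_neq0.
    + by rewrite a0 rmorph0 add0r ratrC realCE.
  - by exfalso; apply: d1; apply: (SQ1 _ (a / b) sf d0); apply: sq_div; rewrite // mulrC.
  - exfalso; apply: d3; apply: (SQ3 _ (a / b) sf d0); apply: sq_div => //.
    by rewrite H natrM; ring.
  - exfalso; apply: d3; apply: (SQ3 _ (3 * a / b) sf d0); apply: sq_div => //.
    have -> : (3 * d)%:R * b ^+ 2 = 3 * (d%:R * b ^+ 2) :> rat by rewrite natrM; ring.
    by rewrite -H exprMn; ring.
apply: rev_gen => l ->; split.
- exact: Qs_sqrtm.
- apply: notreal_Im; rewrite sqrtmE /=.
  by rewrite gt_eqF // sqrtr_gt0 ltr0n.
- by rewrite sqrtmE; apply: ra_imag; rewrite sqrtr_gt0 ltr0n.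
Qed.

Lemma sqrtm1 : @sqrtm R 1 = iC R.
Proof. by rewrite sqrtmE mulr1n sqrtr1. Qed.

Lemma Qs_one d : @Qsqrtm R d 1.
Proof. by have := Qs_rat R d 1; rewrite rmorph1. Qed.
Lemma Qs_m1 d : @Qsqrtm R d (-1).
Proof. by have := Qs_rat R d (-1); rewrite rmorphN1. Qed.
Lemma Qs_two d : @Qsqrtm R d 2.
Proof. by have := Qs_rat R d 2; rewrite ratr_nat. Qed.

Lemma part3 (L1 L2 : C -> Prop) :
  rational_angle (@Qsqrtm R 1) L1 L2 <->
  angle_of_form (@Qsqrtm R 1)
    (fun l => l = iC R \/ l = iC R + 1 \/ l = iC R - 1) L1 L2.
Proof.
split.
  move/(angle_fwd R 1 L1 L2 isT) => [v1 [a [b [hv v0 b0 E1 [E2 H]]]]].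
  rewrite sqrtm1 in E2.
  case: H => [|[|[]]] H.
  - have a0 : a = 0 by move/eqP: H; rewrite expf_eq0 /= => /eqP.
    apply: (fwd_finish R _ _ v1 L1 L2 _ (iC R) (ratr b) hv v0 _ _ _ E1 E2) => //.
    + by left.
    + exact: ratrC_neq0.
    + by rewrite a0 rmorph0 add0r ratrC realCE.
  - have [ab|ab] : a = 1 * b \/ a = - (1 * b) by apply: sq_pm; rewrite H mulr1n expr1n.
    + apply: (fwd_finish R _ _ v1 L1 L2 _ (iC R + 1) (ratr b) hv v0 _ _ _ E1 E2) => //.
      * by right; left.
      * exact: ratrC_neq0.
      * by rewrite ab mul1r; cnorm; congr (_ +i* _); ring.
    + apply: (fwd_finish R _ _ v1 L1 L2 _ (iC R - 1) (ratr b) hv v0 _ _ _ E1 E2) => //.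
      * by right; right.
      * exact: ratrC_neq0.
      * by rewrite ab mul1r; cnorm; rewrite rN; congr (_ +i* _); ring.
  - exfalso; have h := SQ3 1 (a / b) sf1 isT.
    have e : a ^+ 2 = (3 * 1)%:R * b ^+ 2 by rewrite H natrM; ring.
    by have := h (sq_div a b _ b0 e).
  - exfalso; have h := SQ3 1 (3 * a / b) sf1 isT.
    have e : (3 * a) ^+ 2 = (3 * 1)%:R * b ^+ 2 by rewrite exprMn natrM -mulrA -H; ring.
    by have := h (sq_div _ b _ b0 e).
apply: rev_gen => l [->|[->|->]]; split.
- by rewrite -sqrtm1; exact: Qs_sqrtm.
- by apply: notreal_Im; rewrite /= oner_eq0.
- exact: ra_i.
- by rewrite -sqrtm1; apply: Qs_add; [exact: Qs_sqrtm | exact: Qs_one].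
- by apply: notreal_Im; rewrite /iC; cnorm; rewrite ?addr0 ?subr0 oner_eq0.
- have -> : iC R + 1 = 1 +i* 1 by rewrite /iC; cnorm; congr (_ +i* _); ring.
  exact: ra_45.
- by rewrite -sqrtm1; apply: Qs_add; [exact: Qs_sqrtm | exact: Qs_m1].
- by apply: notreal_Im; rewrite /iC; cnorm; rewrite ?addr0 ?subr0 oner_eq0.
- have -> : iC R - 1 = (0 +i* 1) * (1 +i* 1) by rewrite /iC; cnorm; congr (_ +i* _); ring.
  exact: ra_mul (ra_i R) (ra_45 R).
Qed.

Lemma part4 (L1 L2 : C -> Prop) :
  let zeta := (-1 + @sqrtm R 3) / 2 in
  rational_angle (@Qsqrtm R 3) L1 L2 <->
  angle_of_form (@Qsqrtm R 3)
    (fun l => l = @sqrtm R 3 \/ l = zeta \/ l = zeta - 1 \/ l = zeta + 1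
              \/ l = zeta + 2) L1 L2.
Proof.
move=> zeta.
have s2 : sq 3 ^+ 2 = 3 := sq2 R 3.
have s0 : 0 < sq 3 by rewrite sqrtr_gt0 ltr0n.
move: s2 s0; set s := sq 3 => s2 s0.
have zE : zeta = (- 2^-1) +i* (s / 2).
  by rewrite /zeta sqrtmE -/s; cnorm; congr (_ +i* _); field.
have c2 : forall b : rat, b != 0 -> 2 * (ratr b : R) != 0.
  by move=> b b0; rewrite mulf_neq0 ?pnatr_eq0 // ratrC_neq0.
split.
  move=> HA; have := angle_fwd R 3 L1 L2 isT HA; move=> [v1 [a [b [hv v0 b0 E1 [E2 H]]]]].
  rewrite sqrtmE -/s in E2.
  case: H => [|[|[]]] H.
  - have a0 : a = 0 by move/eqP: H; rewrite expf_eq0 /= => /eqP.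
    apply: (fwd_finish R _ _ v1 L1 L2 _ (@sqrtm R 3) (ratr b) hv v0 _ _ _ E1 _) => //.
    + by left.
    + exact: ratrC_neq0.
    + by rewrite E2 a0 sqrtmE -/s; congr line; congr (_ * _); cnorm; rewrite r0; congr (_ +i* _); ring.
  - by exfalso; have := SQ1 3 (a / b) sf3 isT (sq_div a b _ b0 H).
  - have [ab|ab] : a = 3 * b \/ a = - (3 * b) by apply: sq_pm; rewrite H; ring.
    + apply: (fwd_finish R _ _ v1 L1 L2 _ (zeta + 2) (2 * ratr b) hv v0 _ _ _ E1 E2) => //.
      * by right; right; right; right.
      * exact: c2.
      * by rewrite ab zE; cnorm; rewrite rM ratr_nat; congr (_ +i* _); field.
    + apply: (fwd_finish R _ _ v1 L1 L2 _ (zeta - 1) (2 * ratr b) hv v0 _ _ _ E1 E2) => //.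
      * by right; right; left.
      * exact: c2.
      * by rewrite ab zE; cnorm; rewrite rN rM ratr_nat; congr (_ +i* _); field.
  - have [ab|ab] : a = 1 * b \/ a = - (1 * b).
      by apply: sq_pm; apply: (mulfI (_ : (3 : rat) != 0)) => //; rewrite H; ring.
    + apply: (fwd_finish R _ _ v1 L1 L2 _ (zeta + 1) (2 * ratr b) hv v0 _ _ _ E1 E2) => //.
      * by right; right; right; left.
      * exact: c2.
      * by rewrite ab zE mul1r; cnorm; congr (_ +i* _); field.
    + apply: (fwd_finish R _ _ v1 L1 L2 _ zeta (2 * ratr b) hv v0 _ _ _ E1 E2) => //.
      * by right; left.
      * exact: c2.
      * by rewrite ab zE mul1r; cnorm; rewrite rN; congr (_ +i* _); field.
have hz : @Qsqrtm R 3 zeta.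
  apply: Qs_mul; first by apply: Qs_add; [exact: Qs_m1 | exact: Qs_sqrtm].
  by apply: Qs_inv; exact: Qs_two.
have s20 : s / 2 != 0 by rewrite gt_eqF // divr_gt0.
have z1E : zeta + 1 = 2^-1 +i* (s / 2) by rewrite zE; cnorm; congr (_ +i* _); field.
have ra1 : rational_arg (zeta + 1) by rewrite z1E; exact: ra_60.
have n1 : zeta + 1 != 0 by apply/eqP=> h; move: z1E; rewrite h => /eqCI [_ /esym/eqP]; rewrite (negPf s20).
have raS : rational_arg (0 +i* s : C) by exact: ra_imag.
apply: rev_gen => l [->|[->|[->|[->|->]]]]; split.
- exact: Qs_sqrtm.
- by apply: notreal_Im; rewrite sqrtmE /= gt_eqF.
- by rewrite sqrtmE.
- exact: hz.
- by apply: notreal_Im; rewrite zE.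
- have -> : zeta = (zeta + 1) * (zeta + 1) by rewrite z1E zE; cnorm; congr (_ +i* _); field: s2.
  exact: ra_mul.
- by apply: Qs_add; [exact: hz | exact: Qs_m1].
- by apply: notreal_Im; rewrite zE; cnorm; rewrite ?addr0 ?subr0.
- have -> : zeta - 1 = (0 +i* s) * (zeta + 1) by rewrite z1E zE; cnorm; congr (_ +i* _); field: s2.
  exact: ra_mul.
- by apply: Qs_add; [exact: hz | exact: Qs_one].
- by apply: notreal_Im; rewrite z1E.
- exact: ra1.
- by apply: Qs_add; [exact: hz | exact: Qs_two].
- by apply: notreal_Im; rewrite zE; cnorm; rewrite ?addr0 ?subr0.
- have P : (zeta + 2) * (zeta + 1) = 0 +i* s by rewrite z1E zE; cnorm; congr (_ +i* _); field: s2.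
  have -> : zeta + 2 = (0 +i* s) * (zeta + 1)^-1 by rewrite -P mulfK.
  exact: ra_mul raS (ra_inv _ _ ra1).
Qed.
End Parts.


Section P1.
Variable R : realType.
Local Notation C := R[i].
Local Notation sq d := (Num.sqrt (d%:R : R)).

Lemma rcD (p q : rat) : (ratr (p + q) : C) = ratr p + ratr q. Proof. exact: rmorphD. Qed.
Lemma rcB (p q : rat) : (ratr (p - q) : C) = ratr p - ratr q. Proof. exact: rmorphB. Qed.
Lemma rcM (p q : rat) : (ratr (p * q) : C) = ratr p * ratr q. Proof. exact: rmorphM. Qed.
Lemma rcN (p : rat) : (ratr (- p) : C) = - ratr p. Proof. exact: rmorphN. Qed.
Lemma rcV (p : rat) : (ratr (p^-1) : C) = (ratr p)^-1. Proof. exact: fmorphV. Qed.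
Lemma rcX (p : rat) : (ratr (p ^+ 2) : C) = ratr p ^+ 2. Proof. exact: rmorphXn. Qed.
Lemma rc2 : (ratr 2 : C) = 2. Proof. exact: ratr_nat. Qed.
Lemma rc0 (p : rat) : p != 0 -> (ratr p : C) != 0. Proof. by rewrite fmorph_eq0. Qed.

Lemma part1_rev (V : C -> Prop) d : (0 < d)%N -> homothetic V (@Qsqrtm R d) -> is_CM V.
Proof.
move=> d0 [la [la0 hV]]; exists (@sqrtm R d); split.
  move=> q; rewrite sqrtmE ratrC => -[_]; apply/eqP.
  by rewrite gt_eqF // sqrtr_gt0 ltr0n.
move=> z Vz.
have h1 : @Qsqrtm R d (la * z) by apply/hV; exists z.
have h2 : @Qsqrtm R d (@sqrtm R d * (la * z)) by apply: Qs_mul => //; exact: Qs_sqrtm.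
have [y [Vy yE]] := iffLR (hV _) h2.
suff -> : @sqrtm R d * z = y by [].
by apply: (mulfI la0); rewrite -yE mulrCA.
Qed.

Lemma sq_real (m : C) (D : R) : m ^+ 2 = D%:C -> 0 <= D -> is_realC m.
Proof.
case: m => p q; rewrite expr2 mulCE realCE => /eqCI [h1 h2] D0.
apply/realC_Im => /=.
have : p * q = 0 by lra.
move/eqP; rewrite mulf_eq0 => /orP [/eqP p0|/eqP //].
rewrite p0 in h1.
have : q * q <= 0 by lra.
move=> hq; apply/eqP; rewrite -sqrf_eq0 expr2 eq_le hq /=.
by rewrite -expr2 sqr_ge0.
Qed.


Lemma invRE (a : R) : (a +i* 0)^-1 = a^-1 +i* 0 :> C.
Proof.
rewrite invCE; have [->|a0] := eqVneq a 0; first by rewrite !mul0r invr0 oppr0.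
by congr (_ +i* _); [field | rewrite mul0r oppr0].
Qed.

Lemma part1_fwd (V : C -> Prop) : is_space V -> is_CM V ->
  exists d : nat, (0 < d)%N /\ squarefree d /\ homothetic V (@Qsqrtm R d).
Proof.
move=> [[e1 [e2 [Qi HV]]] [u [w [Vu [Vw Ri]]]]] [l [lnq lV]].
have e10 : e1 != 0.
  apply/eqP=> e0; have := Qi 1 0; rewrite e0 mulr0 rmorph0 mul0r addr0 => /(_ erefl) [h _].
  by move/eqP: h; rewrite oner_eq0.
have Ve1 : V e1 by apply/HV; exists 1, 0; rewrite rmorph1 rmorph0 mul1r mul0r addr0.
have Ve2 : V e2 by apply/HV; exists 0, 1; rewrite rmorph1 rmorph0 mul1r mul0r add0r.
have [al [be E1]] := iffLR (HV _) (lV _ Ve1).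
have [ga [de E2]] := iffLR (HV _) (lV _ Ve2).
have be0 : be != 0.
  apply/eqP=> b0; move: E1; rewrite b0 rmorph0 mul0r addr0 => /(mulIf e10) h; exact: lnq al h.
have rbe0 := rc0 _ be0.
set rho : rat := (al - de) / 2.
set D : rat := rho ^+ 2 + be * ga.
set m : C := l - ratr al + ratr rho.
have beE : ratr be * e2 = (m - ratr rho) * e1.
  have -> : (m - ratr rho) * e1 = l * e1 - ratr al * e1 by rewrite /m; ring.
  by rewrite E1; ring.
have e2E : e2 = (m - ratr rho) / ratr be * e1.
  by apply: (mulfI rbe0); rewrite beE; field.
have rhoE : ratr al = ratr de + 2 * ratr rho :> C.
  by rewrite /rho rcM rcV rcB rc2; field.
clearbody rho.
have hh : l * ((m - ratr rho) * e1) = ratr be * ratr ga * e1 + ratr de * ((m - ratr rho) * e1).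
  by rewrite -beE mulrCA E2; ring.
have h : (l * (m - ratr rho) - ratr be * ratr ga - ratr de * (m - ratr rho)) * e1 = 0.
  have -> : (l * (m - ratr rho) - ratr be * ratr ga - ratr de * (m - ratr rho)) * e1 =
    l * ((m - ratr rho) * e1) - ratr be * ratr ga * e1 - ratr de * ((m - ratr rho) * e1) by ring.
  by rewrite hh; ring.
have h0 : l * (m - ratr rho) - ratr be * ratr ga - ratr de * (m - ratr rho) = 0.
  by move/eqP: h; rewrite mulf_eq0 (negPf e10) orbF => /eqP.
have lE : l = m + ratr al - ratr rho by rewrite /m; ring.
have mD : m ^+ 2 = ratr D.
  rewrite /D rcD rcX rcM.
  apply/eqP; rewrite -subr_eq0; apply/eqP; rewrite -[RHS]h0.
  move: h0; clearbody m => _.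
  by rewrite lE rhoE; ring.
clearbody m.
case: (lerP 0 D) => [D0|D0].
  exfalso.
  have [mr mE] : is_realC m by apply: (sq_real _ (ratr D)); rewrite ?ler0q // mD ratrC.
  have Vreal : forall z, V z -> exists r : R, z = r%:C * e1.
    move=> z /HV [a [b ->]].
    exists (ratr a + ratr b * (mr - ratr rho) / ratr be).
    rewrite e2E mE.
    suff -> : ((ratr a + ratr b * (mr - ratr rho) / ratr be : R)%:C : C)
      = ratr a + ratr b * (mr%:C - ratr rho) / ratr be by ring.
    rewrite !ratrC !realCE invRE; cnorm.
    by congr (_ +i* _); ring.
  have [x ux] := Vreal u Vu; have [y wy] := Vreal w Vw.
  have [y0 x0] : y = 0 /\ - x = 0.
    apply: Ri; rewrite ux wy.
    have -> : (-x)%:C = - x%:C :> C by rewrite rmorphN.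
    by ring.
  have u0 : u = 0 by rewrite ux -[x]opprK x0 oppr0 mul0r.
  have [h1 _] : (1 : R) = 0 /\ (0 : R) = 0.
    by apply: (Ri 1 0); rewrite u0 mulr0 mul0r addr0.
  by move/eqP: h1; rewrite oner_eq0.
have [d [k [d0 sf k0 DE]]] := sf_decomp_rat (-D) (ltac:(by rewrite oppr_gt0)).
exists d; split=> //; split=> //.
set x := @sqrtm R d.
have hx2 : x ^+ 2 = - d%:R :> C.
  rewrite /x sqrtmE; cnorm; congr (_ +i* _); last by ring.
  by have := sq2 R d; move: (Num.sqrt _) => S hS; rewrite -hS; ring.
have DE' : (ratr D : C) = - (d%:R * ratr k ^+ 2).
  by rewrite -[D]opprK DE rcN rcM rcX ratr_nat.
have [kap [kap0 mE]] : exists kap : rat, kap != 0 /\ m = ratr kap * x.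
  have : (m - ratr k * x) * (m + ratr k * x) = 0.
    by rewrite -subr_sqr mD DE' (exprMn _ (ratr k)) hx2; ring.
  move/eqP; rewrite mulf_eq0 => /orP [/eqP e|/eqP e].
    by exists k; split=> //; apply/eqP; rewrite -subr_eq0 e.
  exists (- k); split; first by rewrite oppr_eq0.
  by apply/eqP; rewrite rcN -subr_eq0 mulNr opprK e.
have rkap0 := rc0 _ kap0.
exists e1^-1; split; first by rewrite invr_eq0.
move=> z; split.
  move=> [A [B ->]].
  exists ((ratr A + ratr B * x) * e1); split; last by rewrite [RHS]mulrC mulfK.
  apply/HV.
  exists (A + (B * be / kap) * rho / be), (B * be / kap).
  rewrite e2E mE !(rcD, rcB, rcN, rcM, rcV).
  by field; rewrite rbe0 rkap0.
move=> [y [/HV [a [b ->]] ->]].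
exists (a - b * rho / be), (b * kap / be).
rewrite -/x e2E mE !(rcD, rcB, rcN, rcM, rcV).
by field; rewrite rbe0 e10.
Qed.
End P1.

Theorem theorem4p2 (R : realType) :
  (* (i) *)
  (forall V : R[i] -> Prop, is_space V ->
     (is_CM V <-> exists d : nat, (0 < d)%N /\ squarefree d /\
                                  homothetic V (@Qsqrtm R d))) /\
  (* (ii) *)
  (forall d : nat, (0 < d)%N -> squarefree d -> d <> 1%N -> d <> 3%N ->
     forall L1 L2 : R[i] -> Prop,
       rational_angle (@Qsqrtm R d) L1 L2 <->
       angle_of_form (@Qsqrtm R d) (fun l => l = @sqrtm R d) L1 L2) /\
  (* (iii) *)
  (forall L1 L2 : R[i] -> Prop,
     rational_angle (@Qsqrtm R 1) L1 L2 <->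
     angle_of_form (@Qsqrtm R 1)
       (fun l => l = iC R \/ l = iC R + 1 \/ l = iC R - 1) L1 L2) /\
  (* (iv) *)
  (forall L1 L2 : R[i] -> Prop,
     let zeta := (-1 + @sqrtm R 3) / 2 in
     rational_angle (@Qsqrtm R 3) L1 L2 <->
     angle_of_form (@Qsqrtm R 3)
       (fun l => l = @sqrtm R 3 \/ l = zeta \/ l = zeta - 1 \/ l = zeta + 1
                 \/ l = zeta + 2) L1 L2).
Proof.
split.
  move=> V sp; split; first exact: part1_fwd R V sp.
  by move=> [d [d0 [_ hom]]]; exact: part1_rev R V d d0 hom.
split; first exact: part2 R.
split; first exact: part3 R.
by move=> L1 L2; exact: part4 R L1 L2.
Qed.
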